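(* Let $0\le\pi_1\le\pi_2\le1$ and, for $k=1,2$, let $X^k_1,X^k_2,\dots$ be independent Bernoulli$(\pi_k)$ random variables, and $S^k_t=\sum_{j=1}^tX^k_j$. Let $(l_t)_{t\in\mathbb{N}}$ and $(u_t)_{t\in\mathbb{N}}$ be arbitrary integer sequences and, for $k=1,2$, let $\tau_k=\infty$ if $l_t<S^k_t<u_t$ for all $t\in\mathbb{N}$, and $\tau_k=\min\{j: S^k_j\le l_j\text{ or }S^k_j\ge u_j\}$ otherwise. If $t\in\mathbb{N}$ is such that $\mathbb{P}[\tau_k>t]>0$ for $k=1,2$, then the conditional law of $S^1_t$ given $\tau_1>t$ is stochastically smaller than the conditional law of $S^2_t$ given $\tau_2>t$, i.e. $\mathbb{P}(S^1_t\le x\mid\tau_1>t)\ge\mathbb{P}(S^2_t\le x\mid\tau_2>t)$ for all $x\in\mathbb{R}$.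
   Context: $\mathbb{N}=\{1,2,\dots\}$. *)

(* Defs.v *)
From HB Require Import structures.
From mathcomp Require Import all_boot all_order all_algebra.
From mathcomp Require Import all_classical all_reals all_analysis.
Set Implicit Arguments. Unset Strict Implicit. Unset Printing Implicit Defensive.
Import Order.TTheory GRing.Theory Num.Theory.
Local Open Scope classical_set_scope.
Local Open Scope ring_scope.

Definition mutually_independent d (T : measurableType d) (R : realType)
  (P : probability T R) (X : nat -> {RV P >-> R}) : Prop :=
  forall (J : seq nat) (B : nat -> set R), uniq J ->
    (forall j, j \in J -> measurable (B j)) ->
    P (\bigcap_(j in [set` J]) (X j @^-1` B j)) =
    (\prod_(j <- J) P (X j @^-1` B j))%E.

Definition bernoulli_rv d (T : measurableType d) (R : realType)
  (P : probability T R) (X : {RV P >-> R}) (p : R) : Prop :=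
  P (X @^-1` [set 1]) = p%:E /\ P (X @^-1` [set 0]) = (1 - p)%:E.

(* Partial sums: the paper's X_1, X_2, ... are X 0, X 1, ...,
   so S_t = X_1 + ... + X_t = \sum_(j < t) X j. *)
Definition partial_sum d (T : measurableType d) (R : realType)
  (P : probability T R) (X : nat -> {RV P >-> R}) (t : nat) (w : T) : R :=
  \sum_(j < t) X j w.

(* The event {tau > t}: with tau = min{ j >= 1 : S_j <= l_j or S_j >= u_j }
   (tau = oo if no such j), tau > t holds iff l_j < S_j < u_j for all
   1 <= j <= t. *)
Definition tau_gt d (T : measurableType d) (R : realType)
  (P : probability T R) (X : nat -> {RV P >-> R}) (l u : nat -> int) (t : nat)
  : set T :=
  [set w | forall j : nat, (1 <= j <= t)%N ->
     ((l j)%:~R < partial_sum X j w) && (partial_sum X j w < (u j)%:~R)].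

Definition cond_prob d (T : measurableType d) (R : realType)
  (P : probability T R) (A B : set T) : R :=
  fine (P (A `&` B)) / fine (P B).

(* Main.v *)
Require Import Defs.
From HB Require Import structures.
From mathcomp Require Import all_boot all_order all_algebra.
From mathcomp Require Import all_classical all_reals all_analysis.
From mathcomp Require Import measurable_realfun.
From mathcomp Require Import zify ring lra.
Import Order.TTheory GRing.Theory Num.Theory.
Local Open Scope classical_set_scope.
Local Open Scope ring_scope.
Set Implicit Arguments. Unset Strict Implicit.
Section Gen.
Context (R : realType) (d : measure_display) (T : measurableType d)
  (P : probability T R) (X : nat -> {RV P >-> R}) (p : R) (t : nat).

Lemma ps_meas j : measurable_fun setT (partial_sum X j).
Proof.
elim: j => [|j IH].
  have -> : partial_sum X 0 = cst 0 by apply/funext => w; rewrite /partial_sum big_ord0.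
  exact: measurable_cst.
have -> : partial_sum X j.+1 = partial_sum X j \+ X j.
  by apply/funext => w; rewrite /partial_sum big_ord_recr.
apply: measurable_funD => //; exact: measurable_funP.
Qed.

Lemma tau_meas l u : measurable (tau_gt X l u t).
Proof.
have -> : tau_gt X l u t = \bigcap_(j in [set j | (1 <= j <= t)%N])
   (partial_sum X j @^-1` `](l j)%:~R, (u j)%:~R[).
  apply/seteqP; split => w /=.
    by move=> H j /H; rewrite /= in_itv.
  by move=> H j /H; rewrite /= in_itv.
apply: fin_bigcap_measurable.
  apply: (@sub_finite_set _ _ `I_t.+1); last exact: finite_II.
  by move=> j /= /andP[_ ?].
move=> j _; rewrite -[X in measurable X]setTI; apply: ps_meas => //.
Qed.

Lemma le_meas x : measurable [set w | partial_sum X t w <= x].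
Proof.
have -> : [set w | partial_sum X t w <= x] = partial_sum X t @^-1` `]-oo, x].
  by apply/seteqP; split => w /=; rewrite in_itv.
rewrite -[X in measurable X]setTI; apply: ps_meas => //; exact: measurable_itv.
Qed.
End Gen.

Lemma key0 (R : realFieldType) (p1 p2 : R) (m k r : nat) :
  0 <= p1 -> p1 <= p2 -> p2 <= 1 ->
  p2 ^+ m * (1 - p2) ^+ (r + k) * (p1 ^+ (m + k) * (1 - p1) ^+ r) <=
  p1 ^+ m * (1 - p1) ^+ (r + k) * (p2 ^+ (m + k) * (1 - p2) ^+ r).
Proof.
move=> h1 h12 h2.
set C := p1 ^+ m * p2 ^+ m * (1 - p1) ^+ r * (1 - p2) ^+ r.
have H : C * (p1 * (1 - p2)) ^+ k <= C * (p2 * (1 - p1)) ^+ k.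
  apply: ler_wpM2l.
    by rewrite /C !mulr_ge0 // exprn_ge0 // ?subr_ge0 //; lra.
  apply: lerXn2r; rewrite ?inE ?nnegrE; try (apply: mulr_ge0; lra).
  by rewrite !mulrBr !mulr1 [p2 * p1]mulrC lerD2r.
apply: (le_trans _ (le_trans H _)).
  by rewrite le_eqVlt; apply/orP; left; apply/eqP; rewrite /C !exprD exprMn; ring.
by rewrite le_eqVlt; apply/orP; left; apply/eqP; rewrite /C !exprD exprMn; ring.
Qed.

Lemma key (R : realFieldType) (p1 p2 : R) (m n t : nat) :
  0 <= p1 -> p1 <= p2 -> p2 <= 1 -> (m < n)%N -> (n <= t)%N ->
  p2 ^+ m * (1 - p2) ^+ (t - m) * (p1 ^+ n * (1 - p1) ^+ (t - n)) <=
  p1 ^+ m * (1 - p1) ^+ (t - m) * (p2 ^+ n * (1 - p2) ^+ (t - n)).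
Proof.
move=> h1 h12 h2 mn nt.
have := @key0 R p1 p2 m (n - m) (t - n) h1 h12 h2.
have e1 : (t - n + (n - m) = t - m)%N by lia.
have e2 : (m + (n - m) = n)%N by lia.
by rewrite e1 e2.
Qed.

Lemma prod_bits (R : comRingType) (p : R) (s : seq bool) :
  \prod_(c <- s) (if c then p else 1 - p) = p ^+ count id s * (1 - p) ^+ count negb s.
Proof.
elim: s => [|c s IH]; first by rewrite big_nil mulr1.
rewrite big_cons IH; case: c => /=; rewrite !exprS; ring.
Qed.

Lemma sum_bits (R : comRingType) (s : seq bool) :
  \sum_(c <- s) (if c then 1 else 0 : R) = (count id s)%:R.
Proof.
elim: s => [|c s IH]; first by rewrite big_nil.
rewrite big_cons IH; case: c => /=; last by rewrite add0r.
by rewrite -natr1 addrC.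
Qed.

Section Atoms.
Context (R : realType) (d : measure_display) (T : measurableType d)
  (P : probability T R) (X : nat -> {RV P >-> R}) (p : R) (t : nat).
Hypothesis indep : mutually_independent X.
Hypothesis bern : forall j, bernoulli_rv (X j) p.

Definition bit (c : bool) : R := if c then 1 else 0.
Definition atom (b : t.-tuple bool) : set T :=
  \bigcap_(j in [set` iota 0 t]) (X j @^-1` [set bit (nth false b j)]).
Definition qp (b : t.-tuple bool) : R :=
  \prod_(j < t) (if nth false b j then p else 1 - p).
Definition G01 : set T := \bigcap_(j in [set` iota 0 t]) (X j @^-1` [set 0; 1]).

Lemma atom_meas b : measurable (atom b).
Proof.
apply: fin_bigcap_measurable; first exact: finite_seq.
move=> j _; apply: measurable_funPTI; exact: measurable_set1.
Qed.

Lemma G01_meas : measurable G01.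
Proof.
apply: fin_bigcap_measurable; first exact: finite_seq.
move=> j _; apply: measurable_funPTI; apply: measurableU; exact: measurable_set1.
Qed.

Lemma P_atom b : P (atom b) = (qp b)%:E.
Proof.
rewrite /atom (@indep (iota 0 t) (fun j => [set bit (nth false b j)]) (iota_uniq 0 t));
  last by move=> j _; exact: measurable_set1.
have -> : iota 0 t = index_iota 0 t by rewrite /index_iota subn0.
rewrite /qp -prodEFin big_mkord.
apply: eq_bigr => j _; have [h1 h0] := bern j.
by case: nth; rewrite /bit ?h1 ?h0.
Qed.

Lemma P_G01 : P G01 = 1%E.
Proof.
rewrite /G01 (@indep (iota 0 t) (fun j => [set 0; 1]) (iota_uniq 0 t)); last first.
  by move=> j _; apply: measurableU; exact: measurable_set1.
rewrite big1 // => j _; have [h1 h0] := bern j.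
rewrite preimage_setU measureU.
- rewrite -[LHS]/(P (X j @^-1` [set 0%R]) + P (X j @^-1` [set 1%R]))%E h0 h1.
  by rewrite -EFinD subrK.
- apply: measurable_funPTI; exact: measurable_set1.
- apply: measurable_funPTI; exact: measurable_set1.
apply/seteqP; split => w //= [->] /eqP; by rewrite eq_sym oner_eq0.
Qed.


Lemma atom_X b w j : atom b w -> (j < t)%N -> X j w = bit (nth false b j).
Proof. by move=> h jt; apply: h; rewrite /= mem_iota. Qed.

Lemma atom_G b : atom b `<=` G01.
Proof.
move=> w h j; rewrite /= mem_iota add0n => /andP[_ jt].
by rewrite (atom_X h jt) /bit; case: nth; [right|left].
Qed.

Lemma atom_inj b b' w : atom b w -> atom b' w -> b = b'.
Proof.
move=> h h'; apply: val_inj; apply: (@eq_from_nth _ false); first by rewrite !size_tuple.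
move=> j; rewrite size_tuple => jt.
have := atom_X h jt; rewrite (atom_X h' jt) /bit.
by case: nth; case: nth => // /eqP; rewrite ?oner_eq0 // eq_sym oner_eq0.
Qed.

Lemma G_atom w : G01 w -> atom (mktuple (fun i : 'I_t => X i w == 1)) w.
Proof.
move=> h j; rewrite /= mem_iota add0n => /andP[_ jt].
have := @nth_mktuple _ _ (fun i : 'I_t => X i w == 1) false (Ordinal jt) => /= ->.
have : [set (0:R); 1] (X j w) by apply: h; rewrite /= mem_iota add0n jt.
by case=> ->; rewrite /bit //= ?eqxx // eq_sym oner_eq0.
Qed.

Lemma P_pred (E : set T) (D : set (t.-tuple bool)) : measurable E ->
  (forall b w, atom b w -> (E w <-> D b)) ->
  P E = (\sum_(b | b \in D) qp b)%:E.
Proof.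
move=> mE hE.
have nG : P (~` G01) = 0%E.
  rewrite probability_setC; last exact: G01_meas.
  by rewrite P_G01 subee.
have nEG : P (E `&` ~` G01) = 0%E.
  apply: (subset_measure0 _ _ _ nG) => //.
  - by apply: measurableI => //; apply: measurableC; exact: G01_meas.
  - by apply: measurableC; exact: G01_meas.
have -> : E = (E `&` G01) `|` (E `&` ~` G01) by rewrite -setIUr setUCr setIT.
rewrite measureU; first last.
- by rewrite setIACA setICr !setI0.
- by apply: measurableI => //; apply: measurableC; exact: G01_meas.
- by apply: measurableI => //; exact: G01_meas.
rewrite [X in (_ + X)%E](_ : _ = 0%E) ?adde0; last exact: nEG.
have -> : E `&` G01 = \bigcup_(b in D) atom b.
  apply/seteqP; split => w.
    move=> [Ew Gw]; exists (mktuple (fun i : 'I_t => X i w == 1)).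
      by rewrite -(hE _ _ (G_atom Gw)).
    exact: G_atom.
  by move=> [b Db hb]; split; [rewrite (hE _ _ hb)|exact: atom_G hb].
rewrite measure_fin_bigcup //; first last.
- by move=> b _; exact: atom_meas.
- by move=> b b' _ _ [w [h h']]; exact: atom_inj h h'.
- exact: finite_finset.
rewrite (fsbigE [seq b <- index_enum _ | b \in D]); first last.
- by move=> b Db; rewrite mem_filter mem_index_enum andbT mem_set.
- by move=> b /=; rewrite mem_filter => /andP[]; rewrite inE.
- by rewrite filter_uniq // index_enum_uniq.
rewrite big_filter_cond.
under eq_bigl do rewrite andbb.
rewrite -sumEFin; apply: eq_bigr => b _; exact: P_atom.
Qed.


Definition psb (b : t.-tuple bool) (j : nat) : R := \sum_(i < j) bit (nth false b i).

Lemma atom_ps b w j : atom b w -> (j <= t)%N -> partial_sum X j w = psb b j.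
Proof.
move=> h jt; rewrite /partial_sum /psb; apply: eq_bigr => i _.
apply: atom_X h _; exact: leq_trans (ltn_ord i) jt.
Qed.

Lemma qp_E b : qp b = p ^+ count id b * (1 - p) ^+ (t - count id b).
Proof.
rewrite /qp -(big_mkord xpredT (fun i => if nth false b i then p else 1 - p)).
rewrite -{1}(size_tuple b) -(big_nth false xpredT (fun c => if c then p else 1 - p)).
rewrite prod_bits; congr (_ * _ ^+ _).
have h := count_predC id b; rewrite size_tuple in h.
rewrite -[count negb b]/(count (predC id) b); lia.
Qed.

Lemma psb_t b : psb b t = (count id b)%:R.
Proof.
rewrite /psb -(big_mkord xpredT (fun i => bit (nth false b i))).
rewrite -{1}(size_tuple b) -(big_nth false xpredT bit); exact: sum_bits.
Qed.

Definition Dtau (l u : nat -> int) : set (t.-tuple bool) :=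
  [set b | forall j, (1 <= j <= t)%N ->
     ((l j)%:~R < psb b j) && (psb b j < (u j)%:~R)].
Definition Dle (l u : nat -> int) (x : R) : set (t.-tuple bool) :=
  [set b | psb b t <= x] `&` Dtau l u.

Lemma P_tau l u : P (tau_gt X l u t) = (\sum_(b | b \in Dtau l u) qp b)%:E.
Proof.
apply: P_pred; first exact: tau_meas.
move=> b w h; split => H j /andP[j1 jt]; have := H j; rewrite j1 jt /=;
  by rewrite (atom_ps h jt); apply.
Qed.

Lemma P_le l u x : P ([set w | partial_sum X t w <= x] `&` tau_gt X l u t) =
  (\sum_(b | b \in Dle l u x) qp b)%:E.
Proof.
apply: P_pred.
  by apply: measurableI; [exact: le_meas|exact: tau_meas].
move=> b w h; rewrite /Dle /=; rewrite (atom_ps h (leqnn t)).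
split => -[H1 H2]; split => // j /andP[j1 jt]; have := H2 j; rewrite j1 jt /=;
  by rewrite (atom_ps h jt); apply.
Qed.

End Atoms.


Theorem lemma4 (R : realType)
  (d1 : measure_display) (T1 : measurableType d1) (P1 : probability T1 R)
  (d2 : measure_display) (T2 : measurableType d2) (P2 : probability T2 R)
  (pi1 pi2 : R) (X1 : nat -> {RV P1 >-> R}) (X2 : nat -> {RV P2 >-> R})
  (l u : nat -> int) (t : nat) :
  0 <= pi1 -> pi1 <= pi2 -> pi2 <= 1 ->
  mutually_independent X1 -> (forall j, bernoulli_rv (X1 j) pi1) ->
  mutually_independent X2 -> (forall j, bernoulli_rv (X2 j) pi2) ->
  (1 <= t)%N ->
  (0 < P1 (tau_gt X1 l u t))%E -> (0 < P2 (tau_gt X2 l u t))%E ->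
  forall x : R,
    cond_prob P2 [set w | partial_sum X2 t w <= x] (tau_gt X2 l u t)
    <= cond_prob P1 [set w | partial_sum X1 t w <= x] (tau_gt X1 l u t).
Proof.
move=> h1 h12 h2 ind1 b1 ind2 b2 _ pos1 pos2 x.
rewrite /cond_prob (P_tau t ind1 b1) (P_tau t ind2 b2) (P_le t ind1 b1)
  (P_le t ind2 b2) /=.
rewrite (P_tau t ind1 b1) lte_fin in pos1.
rewrite (P_tau t ind2 b2) lte_fin in pos2.
set D := Dtau R l u in pos1 pos2 *.
have hL : forall b, (b \in Dle l u x) = (b \in D) && (@psb R t b t <= x).
  move=> b; apply/idP/idP.
    by rewrite inE => -[/= H1 H2]; rewrite H1 andbT; apply/mem_set.
  by move=> /andP[/set_mem H1 H2]; apply/mem_set; split.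
under eq_bigl do rewrite hL.
under [X in _ <= X / _]eq_bigl do rewrite hL.
rewrite [X in _ / X <= _](bigID (fun b => @psb R t b t <= x) (fun b => b \in D)) /=.
rewrite [X in _ <= _ / X](bigID (fun b => @psb R t b t <= x) (fun b => b \in D)) /=.
rewrite (bigID (fun b => @psb R t b t <= x) (fun b => b \in D)) /= in pos1.
rewrite (bigID (fun b => @psb R t b t <= x) (fun b => b \in D)) /= in pos2.
set A1 := \sum_(b | _ && (@psb R t b t <= x)) qp pi1 b.
set A2 := \sum_(b | _ && (@psb R t b t <= x)) qp pi2 b.
set B1 := \sum_(b | _ && ~~ (@psb R t b t <= x)) qp pi1 b.
set B2 := \sum_(b | _ && ~~ (@psb R t b t <= x)) qp pi2 b.
rewrite ler_pdivrMr // mulrAC ler_pdivlMr //.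
rewrite !mulrDr [A2 * A1]mulrC lerD2l.
rewrite /A1 /A2 /B1 /B2 !mulr_suml; apply: ler_sum => b /andP[_ hb].
rewrite !mulr_sumr; apply: ler_sum => b' /andP[_ hb'].
rewrite !qp_E; rewrite !psb_t in hb hb'; rewrite -ltNge in hb'.
have mn : (count id b < count id b')%N.
  by rewrite -(ltr_nat R); exact: le_lt_trans hb hb'.
have nt : (count id b' <= t)%N by have := count_size id b'; rewrite size_tuple.
exact: key.
Qed.
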